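(* Let $r\ge 2$ and let $K$ be a basic $r$-hole. Then: (1) $K$ is $(r-1)$-path connected; (2) $d_K(F)\ge 2$ for every $(r-1)$-face $F$ of $K$; (3) for every $r$-face $\bar F$ of $K$, the complex $K-\bar F$ is $(r-1)$-path connected.
   Context: A (finite abstract) simplicial complex $K$ on a finite vertex set $V(K)$ is a family of subsets of $V(K)$ closed under taking subsets and containing every singleton; an $i$-face is a member of cardinality $i+1$; $S_i(K)$ is the set of $i$-faces; facets are inclusion-maximal faces; $K$ is pure if all facets have the same dimension. For an $i$-face $F$, $d_K(F)$ is the number of $(i+1)$-faces of $K$ containing $F$. Two distinct $i$-faces are up-neighbors if their union is an $(i+1)$-face of $K$. $K$ is $i$-path connected if for any two $i$-faces $F,G$ of $K$ there is a sequence $F=F_1,F_2,\dots,F_m=G$ of $i$-faces in which consecutive terms are up-neighbors. $\beta_r(K)=\dim_{\mathbb R}H_r(K;\mathbb R)$ is the $r$-th Betti number (simplicial homology with real coefficients). A basic $r$-hole is a pure $r$-dimensional complex $K$ with $\beta_r(K)=1$ such that for every $r$-face $\bar F$, the complex $K-\bar F$ obtained by deleting only the face $\bar F$ (keeping all its proper subsets) satisfies $\beta_r(K-\bar F)=0$. *)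

(* Defs.v *)
From HB Require Import structures.
From mathcomp Require Import all_boot all_order all_algebra.
From mathcomp Require Import reals.
Set Implicit Arguments. Unset Strict Implicit. Unset Printing Implicit Defensive.
Import Order.TTheory GRing.Theory Num.Theory.

Section Complexes.
Variable V : finType.
Implicit Types (K : {set {set V}}) (F G : {set V}).

Definition is_complex K : Prop :=
  (forall F G, F \in K -> G \subset F -> G \in K) /\ (forall v : V, [set v] \in K).

Definition faces (i : nat) K : {set {set V}} := [set F in K | #|F| == i.+1].

Definition facet K F : Prop :=
  F \in K /\ forall G, G \in K -> F \subset G -> G = F.

Definition pure_dim (r : nat) K : Prop := forall F, facet K F -> #|F| = r.+1.

Definition degK K F : nat := #|[set G in K | (F \subset G) && (#|G| == #|F|.+1)]|.

Definition upnb (i : nat) K : rel {set V} := fun F G =>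
  [&& F \in faces i K, G \in faces i K, F != G & (F :|: G) \in faces i.+1 K].

Definition path_connected (i : nat) K : Prop :=
  forall F G, F \in faces i K -> G \in faces i K ->
    exists s : seq {set V}, path (upnb i K) F s /\ last F s = G.

(* Real simplicial homology. Chains are row vectors indexed by all subsets of V
   (via enum_rank); the vertices are ordered by enum_rank, which fixes orientations. *)
Variable R : realType.
Local Open Scope ring_scope.

Definition nsets := #|{: {set V}}|.

(* boundary of the i-face F on the (i-1)-face G = F \ {v}: (-1)^(position of v in F) *)
Definition bsign F G : R :=
  if [pick v in F :\: G] is Some v then
    (-1) ^+ #|[set u in F | (enum_rank u < enum_rank v)%N]|
  else 0.

(* matrix of the boundary map d_i : C_i -> C_{i-1}; d_0 = 0 (unreduced homology) *)
Definition bdry (i : nat) K : 'M[R]_nsets :=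
  \matrix_(a, b)
    (let F : {set V} := enum_val (a : 'I_#|{: {set V}}|) in
     let G : {set V} := enum_val (b : 'I_#|{: {set V}}|) in
     if [&& (0 < i)%N, F \in faces i K, G \subset F & #|G| == i]
     then bsign F G else 0).

Definition chains (i : nat) K : 'M[R]_nsets :=
  \matrix_(a, b) ((a == b) && ((enum_val (a : 'I_#|{: {set V}}|) : {set V}) \in faces i K))%:R.

Definition cycles (i : nat) K : 'M[R]_nsets := (chains i K :&: kermx (bdry i K))%MS.
Definition boundaries (i : nat) K : 'M[R]_nsets := bdry i.+1 K.

(* beta_i(K) = dim Z_i - dim B_i = dim H_i(K; R) *)
Definition betti (i : nat) K : nat := (\rank (cycles i K) - \rank (boundaries i K))%N.

Definition basic_hole (r : nat) K : Prop :=
  [/\ is_complex K, pure_dim r K, betti r K = 1%N &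
      forall Fb, Fb \in faces r K -> betti r (K :\ Fb) = 0%N].

End Complexes.

(* Main.v *)
Require Import Defs.
From HB Require Import structures.
From mathcomp Require Import all_boot all_order all_algebra.
From mathcomp Require Import reals.
From mathcomp Require Import zify.
Set Implicit Arguments. Unset Strict Implicit. Unset Printing Implicit Defensive.
Import Order.TTheory GRing.Theory Num.Theory.

Section Aux.
Variables (V : finType) (R : realType).
Local Open Scope ring_scope.
Local Notation n := (nsets V).
Local Notation ev := (@enum_val {set V} (mem {: {set V}})).
Local Notation rk := (@enum_rank {set V}).
Implicit Types (K : {set {set V}}) (S X Y F G H : {set V}).

Lemma rkK S : ev (rk S) = S. Proof. exact: enum_rankK. Qed.
Lemma evK (m : 'I_n) : rk (ev m) = m. Proof. exact: enum_valK. Qed.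

Lemma bdryE i K a b : bdry R i K a b =
  if [&& (0 < i)%N, ev a \in faces i K, ev b \subset ev a & #|ev b| == i]
  then bsign R (ev a) (ev b) else 0.
Proof. by rewrite mxE. Qed.

Lemma bdry_nz i K a b : bdry R i K a b != 0 ->
  [/\ (0 < i)%N, ev a \in faces i K, ev b \subset ev a & #|ev b| = i].
Proof.
rewrite bdryE; case: and4P => [[-> -> -> /eqP ->] //|_]; by rewrite eqxx.
Qed.

Lemma chainsP i K (c : 'rV[R]_n) :
  (c <= chains R i K)%MS <-> (forall m, ev m \notin faces i K -> c 0 m = 0).
Proof.
split.
  move=> /submxP [D ->] m nm; rewrite mxE big1 // => j _.
  rewrite mxE /=; case: eqP => [->|] /=; last by rewrite mulr0.
  by rewrite (negbTE nm) mulr0.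
move=> Hc; apply/submxP; exists c; apply/rowP => m.
rewrite mxE (bigD1 m) //= big1 => [|j /negbTE ne]; last by rewrite mxE /= ne mulr0.
rewrite mxE /= eqxx /= addr0; case: (boolP (ev m \in faces i K)) => fm.
  by rewrite mulr1.
by rewrite Hc // mul0r.
Qed.

Lemma facesE i K S : (S \in faces i K) = (S \in K) && (#|S| == i.+1).
Proof. by rewrite inE. Qed.

Lemma facet_exists K S : S \in K -> exists2 G, facet K G & S \subset G.
Proof.
move=> SK.
case: (@arg_maxnP _ S (fun G => (G \in K) && (S \subset G)) (fun G => #|G|)).
  by rewrite SK subxx.
move=> G /andP [GK SG] Hmax; exists G => //; split => // G' G'K GG'.
have : (S \subset G') by apply: subset_trans GG'.
move=> SG'; have le := Hmax G' (introT andP (conj G'K SG')).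
by apply/esym/eqP; rewrite eqEcard GG' /=; exact: le.
Qed.

Lemma face_card r K S : pure_dim r K -> S \in K -> (#|S| <= r.+1)%N.
Proof.
move=> pK SK; case: (facet_exists SK) => G fG SG.
by rewrite -(pK _ fG) subset_leq_card.
Qed.

Lemma face_in_top r K S : pure_dim r K -> S \in K -> (#|S| <= r)%N ->
  exists2 G, G \in faces r K & S \subset G.
Proof.
move=> pK SK _; case: (facet_exists SK) => G fG SG; exists G => //.
by rewrite facesE (pK _ fG) eqxx andbT; case: fG.
Qed.

Lemma bdry0 i K : faces i K = set0 -> bdry R i K = 0.
Proof. by move=> e; apply/matrixP => a b; rewrite mxE /= e inE andbF !mxE. Qed.

Lemma faces_top0 r K : pure_dim r K -> faces r.+1 K = set0.
Proof.
move=> pK; apply/setP => S; rewrite facesE inE; apply/negbTE/andP => [[SK /eqP cS]].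
by have := face_card pK SK; rewrite cS ltnn.
Qed.

Lemma faces_del i K Fb : faces i (K :\ Fb) = faces i K :\ Fb.
Proof. by apply/setP => S; rewrite !inE andbA. Qed.

Lemma betti_top r K : faces r.+1 K = set0 -> betti R r K = \rank (cycles R r K).
Proof. by move=> e; rewrite /betti /boundaries bdry0 // mxrank0 subn0. Qed.

Lemma cycle_vanish r K Fb (c : 'rV[R]_n) : basic_hole R r K -> Fb \in faces r K ->
  (c <= chains R r K)%MS -> c *m bdry R r K = 0 -> c 0 (rk Fb) = 0 -> c = 0.
Proof.
case=> cK pK _ hdel FbK cc cb c0.
have sub : (c <= cycles R r (K :\ Fb))%MS.
  rewrite sub_capmx; apply/andP; split.
    apply/chainsP => m; rewrite faces_del in_setD1 negb_and negbK => /orP [/eqP e|nf].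
      by rewrite -(evK m) e.
    by move/chainsP: cc; apply.
  rewrite sub_kermx; apply/eqP; rewrite -cb; apply/rowP => b; rewrite !mxE.
  apply: eq_bigr => a _; rewrite !mxE /= faces_del in_setD1.
  case: (eqVneq (ev a) Fb) => e /=; last by [].
  by rewrite -(evK a) e c0 !mul0r.
have e0 : faces r.+1 (K :\ Fb) = set0.
  by rewrite faces_del faces_top0 // set0D.
have := hdel Fb FbK; rewrite betti_top // => /eqP; rewrite mxrank_eq0 => /eqP e.
by move: sub; rewrite e => /submx0null.
Qed.

Lemma z_exists r K : basic_hole R r K -> exists z : 'rV[R]_n,
  [/\ (z <= chains R r K)%MS, z *m bdry R r K = 0 &
      forall S, S \in faces r K -> z 0 (rk S) != 0].
Proof.
move=> hK; have hK' := hK; case: hK' => cK pK b1 _.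
have : \rank (cycles R r K) = 1%N by rewrite -betti_top // faces_top0.
move=> rk1; have nz : cycles R r K != 0 by rewrite -mxrank_eq0 rk1.
have [i ri] : exists i, row i (cycles R r K) != 0.
  apply/existsP; apply: contraR nz => /existsPn H.
  apply/eqP/row_matrixP => i; rewrite row0; apply/eqP; move: (H i); by rewrite negbK.
set z := row i _ in ri; have zc : (z <= cycles R r K)%MS by apply: row_sub.
have zch : (z <= chains R r K)%MS by apply: submx_trans zc (capmxSl _ _).
have zb : z *m bdry R r K = 0.
  by apply/eqP; rewrite -sub_kermx; apply: submx_trans zc (capmxSr _ _).
exists z; split => // S SK; apply: contra ri => /eqP z0.
by apply/eqP; apply: (cycle_vanish hK SK).
Qed.

Lemma bsign_nz S X : ~~ (S \subset X) -> bsign R S X != 0.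
Proof.
move=> nS; rewrite /bsign; case: pickP => [v _|none]; first by rewrite signr_eq0.
by move: nS; rewrite -setD_eq0 => /set0Pn [x]; rewrite none.
Qed.

Lemma bsign_one S X x : S :\: X = [set x] ->
  bsign R S X = (-1) ^+ #|[set u in S | (enum_rank u < enum_rank x)%N]|.
Proof.
move=> e; rewrite /bsign; case: pickP => [v|/(_ x)]; rewrite e inE ?eqxx //.
by move/eqP ->.
Qed.

Lemma del_one S X : X \subset S -> #|X|.+1 = #|S| -> exists2 a, a \in S & X = S :\ a.
Proof.
move=> XS cX; have : #|S :\: X| == 1%N.
  by rewrite cardsD (setIidPr XS) -cX subSnn.
case/cards1P => a e; exists a.
  have : a \in S :\: X by rewrite e set11.
  by case/setDP.
by rewrite -e setDDr setDv set0U (setIidPr XS).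
Qed.
Lemma union_eq i X Y S : X \subset S -> Y \subset S -> #|X| = i.+1 -> #|Y| = i.+1 ->
  #|S| = i.+2 -> X != Y -> X :|: Y = S.
Proof.
move=> XS YS cX cY cS XY; apply/eqP; rewrite eqEcard subUset XS YS /= cS.
have : ~~ (Y \subset X).
  apply: contra XY => YX; by rewrite eq_sym eqEcard YX cX cY leqnn.
case/subsetPn => y yY yX.
have : (#|y |: X| <= #|X :|: Y|)%N.
  apply: subset_leq_card; apply/subsetP => z; rewrite !inE => /orP [/eqP ->|->].
    by rewrite yY orbT.
  by [].
by rewrite cardsU1 yX cX.
Qed.

Lemma step i K X Y S : X \in faces i K -> Y \in faces i K -> S \in faces i.+1 K ->
  X \subset S -> Y \subset S -> X = Y \/ upnb i K X Y.
Proof.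
move=> hX hY hS XS YS; case: (eqVneq X Y) => [->|ne]; [by left| right].
rewrite /upnb hX hY ne /=.
move: hX hY hS; rewrite !facesE => /andP [_ /eqP cX] /andP [_ /eqP cY] hS.
by rewrite (union_eq XS YS cX cY) //; case/andP: hS => _ /eqP.
Qed.

Lemma two_choices S u w X : X \subset S -> #|X|.+1 = #|S| -> S :\ u :\ w \subset X ->
  X = S :\ u \/ X = S :\ w.
Proof.
move=> XS cX sub; case: (del_one XS cX) => y yS eX.
case: (eqVneq y u) => [e|yu]; first by left; rewrite eX e.
case: (eqVneq y w) => [e|yw]; first by right; rewrite eX e.
exfalso; have : y \in S :\ u :\ w by rewrite !inE yw yu yS.
by move/(subsetP sub); rewrite eX !inE eqxx.
Qed.

Lemma deg2 r K F : (0 < r)%N -> basic_hole R r K -> F \in faces r.-1 K ->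
  (2 <= degK K F)%N.
Proof.
move=> r0 hK FK; have [cK pK _ _] := hK.
case: (z_exists hK) => z [zch zb zS].
have [FinK cF] : F \in K /\ #|F| = r.
  by move: FK; rewrite facesE prednK // => /andP [? /eqP].
rewrite /degK; set D := [set G in K | _].
have [G0 G0f FG0] := face_in_top pK FinK (eq_leq cF).
have cG0 : #|G0| = r.+1 by move: G0f; rewrite facesE => /andP [_ /eqP].
have G0D : G0 \in D by rewrite inE FG0 cF cG0 eqxx andbT; move: G0f; rewrite facesE => /andP [-> _].
rewrite ltnNge; apply/negP => le1.
have : #|D| == 1%N by rewrite eqn_leq le1 card_gt0; apply/set0Pn; exists G0.
case/cards1P => G1 eD; move: (G0D); rewrite eD => /set1P eG.
have : (z *m bdry R r K) 0 (rk F) = 0 by rewrite zb mxE.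
rewrite mxE (bigD1 (rk G0)) //= big1 => [|a ne].
  rewrite addr0 => /eqP; rewrite mulf_eq0 (negbTE (zS _ G0f)) /= bdryE !rkK r0 G0f FG0 cF eqxx /=.
  apply/negP; apply: bsign_nz; apply/negP => /subset_leq_card.
  by rewrite cF cG0 ltnn.
rewrite bdryE rkK; case: and4P => [[_ af Fa /eqP cFa]|]; last by rewrite mulr0.
exfalso; have : ev a \in D.
  by move: af; rewrite facesE inE Fa cF => /andP [-> ->].
rewrite eD => /set1P e1; move: ne; by rewrite -(evK a) e1 -eG eqxx.
Qed.
Implicit Types (A : {set V}) (u w x : V).
Local Notation P x A := #|[set y in A | (enum_rank y < enum_rank x)%N]|.

Lemma cnt_del A u x : P x A = (((u \in A) && (enum_rank u < enum_rank x)%N) + P x (A :\ u))%N.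
Proof.
rewrite (cardsD1 u); congr (_ + _)%N; first by rewrite inE.
by apply: eq_card => y; rewrite !inE andbA.
Qed.

Lemma sign_pair S u w : u \in S -> w \in S -> u != w ->
  (-1) ^+ P u S * (-1) ^+ P w (S :\ u) + (-1) ^+ P w S * (-1) ^+ P u (S :\ w) = 0 :> R.
Proof.
wlog lt : u w / (enum_rank u < enum_rank w)%N.
  move=> hw uS wS uw; case: (ltngtP (enum_rank u) (enum_rank w)) => [l|l|e].
  - by apply: hw.
  - by rewrite addrC; apply: hw => //; rewrite eq_sym.
  - by move/val_inj/enum_rank_inj: e => e; rewrite e eqxx in uw.
move=> uS wS uw.
rewrite (cnt_del S u w) uS lt (cnt_del S w u) wS.
have -> : (enum_rank w < enum_rank u)%N = false by rewrite ltnNge (ltnW lt).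
rewrite /= add0n add1n exprS mulN1r mulNr.
by rewrite [X in X - _]mulrC subrr.
Qed.

Lemma setD_del A x : x \in A -> A :\: (A :\ x) = [set x].
Proof. by move=> xA; rewrite setDDr setDv set0U; apply/setIidPr; rewrite sub1set. Qed.

Lemma setD1C A x y : A :\ x :\ y = A :\ y :\ x.
Proof. by rewrite !setDDl setUC. Qed.

Lemma dd i K : is_complex K -> bdry R i.+2 K *m bdry R i.+1 K = 0.
Proof.
move=> cK; apply/matrixP => p q; rewrite mxE [RHS]mxE.
case: (boolP [&& ev p \in faces i.+2 K, ev q \subset ev p & #|ev q| == i.+1])
  => [/and3P [Sf HS /eqP cH]| nc]; last first.
  apply: big1 => m _; rewrite !bdryE.
  case: and4P => [[_ Sf Sm /eqP cm]|]; last by rewrite mul0r.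
  case: and4P => [[_ mf Hm /eqP cH]|]; last by rewrite mulr0.
  by exfalso; move/negP: nc; apply; rewrite Sf cH eqxx (subset_trans Hm Sm).
have cS : #|ev p| = i.+3 by move: Sf; rewrite facesE => /andP [_ /eqP].
have SK : ev p \in K by move: Sf; rewrite facesE => /andP [].
have : #|ev p :\: ev q| == 2%N.
  by rewrite cardsD (setIidPr HS) cS cH; apply/eqP; lia.
case/cards2P => u [w [uw e]].
have : u \in ev p :\: ev q by rewrite e !inE eqxx.
case/setDP => uS _.
have : w \in ev p :\: ev q by rewrite e !inE eqxx orbT.
case/setDP => wS _.
have eH : ev q = ev p :\ u :\ w.
  by rewrite setDDl -e setDDr setDv set0U (setIidPr HS).
have Sfu x : x \in ev p -> ev p :\ x \in faces i.+1 K.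
  move=> xS; rewrite facesE; apply/andP; split.
    by case: cK => sK _; apply: sK SK (subD1set _ _).
  by move: (cardsD1 x (ev p)); rewrite xS cS => -[->].
have cSx x : x \in ev p -> #|ev p :\ x| = i.+2.
  by move/Sfu; rewrite facesE => /andP [_ /eqP].
have ne : rk (ev p :\ w) != rk (ev p :\ u).
  rewrite (inj_eq enum_rank_inj); apply/eqP => ee.
  have uw' : u \in ev p :\ w by rewrite !inE uw uS.
  by rewrite ee !inE eqxx in uw'.
rewrite (bigD1 (rk (ev p :\ u))) //= (bigD1 (rk (ev p :\ w))) //= big1; last first.
  move=> m /andP [n1 n2]; rewrite !bdryE.
  case: and4P => [[_ Sf' Sm /eqP cm]|]; last by rewrite mul0r.
  case: and4P => [[_ mf Hm /eqP cH']|]; last by rewrite mulr0.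
  exfalso; have cm' : #|ev m|.+1 = #|ev p| by rewrite cm cS.
  have hs : ev p :\ u :\ w \subset ev m by rewrite -eH.
  case: (two_choices Sm cm' hs) => em.
    by move: n1; rewrite -(evK m) em eqxx.
  by move: n2; rewrite -(evK m) em eqxx.
rewrite addr0 !bdryE !rkK /= Sf (subD1set (ev p) u) (subD1set (ev p) w) !cSx // !eqxx /= !Sfu // cH eqxx /= andbT.
have h1 : ev q \subset ev p :\ u by rewrite eH (subD1set (ev p :\ u) w).
have h2 : ev q \subset ev p :\ w by rewrite eH setD1C (subD1set (ev p :\ w) u).
rewrite h1 h2 /=.
rewrite (bsign_one (setD_del uS)) (bsign_one (setD_del wS)).
have wSu : w \in ev p :\ u by rewrite !inE eq_sym uw wS.
have uSw : u \in ev p :\ w by rewrite !inE uw uS.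
rewrite eH (bsign_one (setD_del wSu)) setD1C (bsign_one (setD_del uSw)).
exact: sign_pair.
Qed.
Definition mask (c : 'rV[R]_n) (T : {set {set V}}) : 'rV[R]_n :=
  \row_j (if ev j \in T then c 0 j else 0).

Lemma mask_chains i K c T : (c <= chains R i K)%MS -> (mask c T <= chains R i K)%MS.
Proof.
move/chainsP => h; apply/chainsP => m nm; rewrite mxE (h m nm); by case: ifP.
Qed.

Lemma mask_bdry c T i K b : (mask c T *m bdry R i K) 0 b =
  \sum_a (if ev a \in T then c 0 a * bdry R i K a b else 0).
Proof. by rewrite mxE; apply: eq_bigr => a _; rewrite mxE; case: ifP; rewrite ?mul0r. Qed.

Lemma sub_in K S X : is_complex K -> S \in K -> X \subset S -> X \in K.
Proof. by case=> h _ SK XS; apply: h SK XS. Qed.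

Lemma pc1 r K : basic_hole R r.+2 K -> path_connected r.+1 K.
Proof.
move=> hK; have [cK pK _ _] := hK; case: (z_exists hK) => z [zch zb zS].
move=> F G FK GK.
suff : connect (upnb r.+1 K) F G by case/connectP => s sp ->; exists s.
set e := upnb r.+1 K.
pose C X := (X \in faces r.+1 K) && connect e F X.
pose T := [set S in faces r.+2 K | [exists X : {set V}, (X \subset S) && C X]].
have cb : mask z T *m bdry R r.+2 K = 0.
  apply/rowP => b; rewrite mask_bdry [RHS]mxE.
  case: (boolP (C (ev b))) => Cb.
    rewrite -[RHS](_ : (z *m bdry R r.+2 K) 0 b = 0); last by rewrite zb mxE.
    rewrite mxE; apply: eq_bigr => a _; case: ifP => // aT.
    case: (eqVneq (bdry R r.+2 K a b) 0) => [->|/bdry_nz [_ af ba cb']]; first by rewrite mulr0.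
    by move/negbT/negP: aT; case; rewrite inE af; apply/existsP; exists (ev b); rewrite ba Cb.
  apply: big1 => a _; case: ifP => [aT|//].
  case: (eqVneq (bdry R r.+2 K a b) 0) => [->|/bdry_nz [_ af ba cb']]; first by rewrite mulr0.
  exfalso; move: aT; rewrite inE => /andP [_ /existsP [X /andP [XS /andP [Xf cFX]]]].
  have bf : ev b \in faces r.+1 K.
    rewrite facesE cb' eqxx andbT; apply: (sub_in cK _ ba).
    by move: af; rewrite facesE => /andP [].
  move/negP: Cb; apply; rewrite /C bf /=.
  case: (step Xf bf af XS ba) => [<- //|u]; exact: connect_trans cFX (connect1 u).
have [FinK /eqP cF] : F \in K /\ #|F| == r.+2 by apply/andP; rewrite -facesE.
have [GinK /eqP cG] : G \in K /\ #|G| == r.+2 by apply/andP; rewrite -facesE.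
have [G1 G1f FG1] := face_in_top pK FinK (eq_leq cF).
have G1T : G1 \in T.
  by rewrite inE G1f; apply/existsP; exists F; rewrite FG1 /C FK connect0.
have cnz : mask z T 0 (rk G1) != 0 by rewrite mxE rkK G1T zS.
have [G2 G2f GG2] := face_in_top pK GinK (eq_leq cG).
have : mask z T 0 (rk G2) != 0.
  apply: contra cnz => /eqP c0.
  by rewrite (cycle_vanish hK G2f (mask_chains T zch) cb c0) mxE.
rewrite mxE rkK; case: ifP => [|_]; last by rewrite eqxx.
rewrite inE => /andP [_ /existsP [X /andP [XG2 /andP [Xf cFX]]]] _.
case: (step Xf GK G2f XG2 GG2) => [<- //|u]; exact: connect_trans cFX (connect1 u).
Qed.
Lemma pc3 r K Fb : basic_hole R r.+2 K -> Fb \in faces r.+2 K ->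
  path_connected r.+1 (K :\ Fb).
Proof.
move=> hK Fbf; have [cK pK _ _] := hK; case: (z_exists hK) => z [zch zb zS].
set K' := K :\ Fb; set e := upnb r.+1 K'.
have [FbK /eqP cFb] : Fb \in K /\ #|Fb| == r.+3 by apply/andP; rewrite -facesE.
have esymm : connect_sym e.
  apply: sym_connect_sym => X Y; rewrite /e /upnb.
  by rewrite andbCA eq_sym setUC.
have core : forall F, F \in faces r.+1 K' -> forall a, a \in Fb -> connect e F (Fb :\ a).
  move=> F FK'.
  pose C X := (X \in faces r.+1 K') && connect e F X.
  pose T := [set S in faces r.+2 K | (S != Fb) && [exists X : {set V}, (X \subset S) && C X]].
  have FbT : (Fb \in T) = false by rewrite inE eqxx /= andbF.
  have formula : forall b, (mask z T *m bdry R r.+2 K) 0 b =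
      if C (ev b) then - (z 0 (rk Fb) * bdry R r.+2 K (rk Fb) b) else 0.
    move=> b; rewrite mask_bdry; case: (boolP (C (ev b))) => Cb.
      have z0 : \sum_a z 0 a * bdry R r.+2 K a b = 0.
        by move/rowP: (zb) => /(_ b); rewrite !mxE.
      rewrite (bigD1 (rk Fb)) //= rkK FbT add0r.
      move: z0; rewrite (bigD1 (rk Fb)) //= addrC => /eqP; rewrite addr_eq0 => /eqP <-.
      apply: eq_bigr => a aF; case: ifP => // aT.
      case: (eqVneq (bdry R r.+2 K a b) 0) => [->|/bdry_nz [_ af ba cb]]; first by rewrite mulr0.
      exfalso; move/negbT/negP: aT; apply; rewrite inE af /=; apply/andP; split.
        by apply: contra aF => /eqP <-; rewrite evK.
      by apply/existsP; exists (ev b); rewrite ba Cb.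
    apply: big1 => a _; case: ifP => [aT|//].
    case: (eqVneq (bdry R r.+2 K a b) 0) => [->|/bdry_nz [_ af ba cb]]; first by rewrite mulr0.
    exfalso; move: aT; rewrite inE => /and3P [_ aFb /existsP [X /andP [Xa /andP [Xf cFX]]]].
    have af' : ev a \in faces r.+2 K' by rewrite faces_del in_setD1 aFb af.
    have bf : ev b \in faces r.+1 K'.
      rewrite faces_del in_setD1 facesE cb eqxx andbT; apply/andP; split.
        by apply/eqP => eb; move: cb; rewrite eb cFb => /eqP; rewrite eqSS (gtn_eqF (ltnSn _)).
      apply: (sub_in cK _ ba); by move: af; rewrite facesE => /andP [].
    move/negP: Cb; apply; rewrite /C bf /=.
    case: (step Xf bf af' Xa ba) => [<- //|u]; exact: connect_trans cFX (connect1 u).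
  have FK : F \in faces r.+1 K by move: FK'; rewrite faces_del => /setD1P [].
  have [FinK /eqP cF] : F \in K /\ #|F| == r.+2 by apply/andP; rewrite -facesE.
  have cFba x : x \in Fb -> #|Fb :\ x| = r.+2.
    by move=> xF; move: (cardsD1 x Fb); rewrite xF cFb => -[].
  have [a aFb CFa] : exists2 a, a \in Fb & C (Fb :\ a).
    case: (boolP [exists a, (a \in Fb) && C (Fb :\ a)]) => [/existsP [a /andP [? ?]]|/existsPn none].
      by exists a.
    exfalso.
    have cb : mask z T *m bdry R r.+2 K = 0.
      apply/rowP => b; rewrite formula [RHS]mxE; case: ifP => // Cb.
      rewrite bdryE rkK; case: and4P => [[_ _ bFb /eqP cbb]|]; last by rewrite mulr0 oppr0.
      exfalso; have cbF : #|ev b|.+1 = #|Fb| by rewrite cbb cFb.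
      case: (del_one bFb cbF) => a aFb eb; move: (none a); by rewrite aFb -eb Cb.
    have c0 : mask z T 0 (rk Fb) = 0 by rewrite mxE rkK FbT.
    have c00 := cycle_vanish hK Fbf (mask_chains T zch) cb c0.
    have dg : (2 <= degK K F)%N by apply: (deg2 (r := r.+2)) => //.
    move: dg; rewrite /degK; set D := [set G in K | _] => dg.
    have : (0 < #|D :\ Fb|)%N.
      rewrite (cardsD1 Fb D) in dg; case: (Fb \in D) dg => /= dg.
        by rewrite add1n ltnS in dg.
      by rewrite add0n in dg; apply: ltnW.
    case/card_gt0P => G1; rewrite !inE => /and3P [G1Fb G1K /andP [FG1 /eqP cG1]].
    have G1f : G1 \in faces r.+2 K by rewrite facesE G1K cG1 cF eqxx.
    have G1T : G1 \in T.
      rewrite inE G1f G1Fb /=; apply/existsP; exists F; rewrite FG1 /C FK' connect0.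
      by [].
    have : mask z T 0 (rk G1) = z 0 (rk G1) by rewrite mxE rkK G1T.
    rewrite c00 mxE => /esym/eqP; by rewrite (negbTE (zS _ G1f)).
  move=> b bFb; suff : C (Fb :\ b) by case/andP.
  apply/negPn/negP => nCb.
  have ba : b != a by apply/eqP => e0; rewrite e0 CFa in nCb.
  have bFa : b \in Fb :\ a by rewrite !inE ba bFb.
  set H := Fb :\ a :\ b.
  have cH : #|H| = r.+1.
    by move: (cardsD1 b (Fb :\ a)); rewrite bFa cFba // => -[].
  have Faf : Fb :\ a \in faces r.+1 K.
    by rewrite facesE cFba // eqxx andbT; apply: (sub_in cK FbK (subD1set _ _)).
  have e0 : (mask z T *m bdry R r.+2 K *m bdry R r.+1 K) 0 (rk H) = 0.
    by rewrite -mulmxA dd // mulmx0 mxE.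
  move: e0; rewrite mxE (bigD1 (rk (Fb :\ a))) //= big1 => [|m ne].
    have s1 : bsign R Fb (Fb :\ a) != 0.
      apply: bsign_nz; apply/subsetPn; exists a => //; by rewrite !inE eqxx.
    have s2 : bsign R (Fb :\ a) H != 0.
      apply: bsign_nz; apply/subsetPn; exists b => //; by rewrite !inE eqxx.
    rewrite addr0 formula rkK CFa !bdryE !rkK /= Fbf (subD1set Fb a) cFba // eqxx /=.
    rewrite Faf (subD1set (Fb :\ a) b) cH eqxx /=.
    move/eqP; rewrite mulf_eq0 oppr_eq0 mulf_eq0 (negbTE (zS _ Fbf)) (negbTE s1) (negbTE s2).
    by [].
  rewrite formula; case: ifP => Cm; last by rewrite mul0r.
  rewrite bdryE rkK; case: and4P => [[_ _ mFb /eqP cm]|]; last by rewrite mulr0 oppr0 mul0r.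
  rewrite bdryE rkK; case: and4P => [[_ _ Hm _]|]; last by rewrite mulr0.
  exfalso; have cm' : #|ev m|.+1 = #|Fb| by rewrite cm cFb.
  case: (two_choices mFb cm' Hm) => em.
    by move: ne; rewrite -(evK m) em eqxx.
  by move: Cm; rewrite em (negbTE nCb).
move=> F G FK GK.
suff : connect e F G by case/connectP => s sp ->; exists s.
have : (0 < #|Fb|)%N by rewrite cFb.
case/card_gt0P => a0 a0F.
apply: connect_trans (core F FK a0 a0F) _.
by rewrite esymm; apply: core.
Qed.
End Aux.

Theorem mainTheorem2 (R : realType) (V : finType) (r : nat) (K : {set {set V}}) :
  (2 <= r)%N -> basic_hole R r K ->
  [/\ path_connected r.-1 K,
      (forall F, F \in faces r.-1 K -> (2 <= degK K F)%N) &
      (forall Fb, Fb \in faces r K -> path_connected r.-1 (K :\ Fb))].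
Proof.
case: r => [|[|r]] // _ hK; split.
- exact: pc1 hK.
- by move=> F FK; exact: (@deg2 V R r.+2 K F isT hK FK).
- by move=> Fb Fbf; exact: pc3 hK Fbf.
Qed.
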